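(* Let $b>a\ge0$ and let $w$ be a palindrome (a word equal to its reverse). Then $$[S(w)]_{21}=[M(w)]_{22}-1\qquad\text{and}\qquad [S(w)]_{22}=[M(w)]_{12}+[S(w)]_{21}.$$ Furthermore, for every $k\in\mathbb{Z}_+$, $$\Big[S(10w)\,M\big(w(10w)^k\big)-S(01w)\,M\big(w(01w)^k\big)\Big]_{22}=0 .$$
   Context: Words are finite strings over $\{0,1\}$, $\epsilon$ the empty word, $w_k$ the $k$-th letter, $w_{1:k}=w_1\cdots w_k$, $|w|$ the length, $w^k$ the $k$-fold repetition ($w^0=\epsilon$), $\mathbb{Z}_+=\{0,1,2,\dots\}$. Define $F=\begin{pmatrix}1&1\\ a&1+a\end{pmatrix}$, $G=\begin{pmatrix}1&1\\ b&1+b\end{pmatrix}$, and for a word $w$, $M(w):=M(w_{|w|})\cdots M(w_1)$ with $M(\epsilon)=I$, $M(0)=F$, $M(1)=G$. The prefix sum is $S(w):=\sum_{k=1}^{|w|}M(w_{1:k})$, with $S(\epsilon)=0$ (the zero matrix). $[A]_{ij}$ denotes the $(i,j)$ entry. *)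

(* Defs.v *)
(* Words over {0,1} are seq bool: false = letter 0, true = letter 1. *)
From HB Require Import structures.
From mathcomp Require Import all_boot all_order all_algebra.
Set Implicit Arguments. Unset Strict Implicit. Unset Printing Implicit Defensive.
Import Order.TTheory GRing.Theory Num.Theory.
Local Open Scope ring_scope.

Section Defs.
Variable R : nzRingType.

Definition Mc (c : R) : 'M[R]_2 :=
  \matrix_(i < 2, j < 2)
    (if i == 0 :> nat then 1 else if j == 0 :> nat then c else 1 + c).

Definition Mlet (a b : R) (x : bool) : 'M[R]_2 := if x then Mc b else Mc a.

(* M(w) = M(w_|w|) ... M(w_1), M(eps) = I *)
Definition Mw (a b : R) (w : seq bool) : 'M[R]_2 :=
  foldl (fun acc x => Mlet a b x *m acc) 1%:M w.

Definition Sw (a b : R) (w : seq bool) : 'M[R]_2 :=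
  \sum_(k < size w) Mw a b (take k.+1 w).

Definition wpow (w : seq bool) (k : nat) : seq bool := flatten (nseq k w).
End Defs.

(* Main.v *)
Require Import Defs.
From HB Require Import structures.
From mathcomp Require Import all_boot all_order all_algebra.
From mathcomp Require Import ring.
Import Order.TTheory GRing.Theory Num.Theory.
Local Open Scope ring_scope.

Section Aux.
Variable R : comNzRingType.
Variables a b : R.

Lemma Mw_foldl w (acc : 'M[R]_2) :
  foldl (fun acc x => Mlet a b x *m acc) acc w = Mw a b w *m acc.
Proof.
elim: w acc => [|x w IH] acc /=; first by rewrite /Mw /= mul1mx.
by rewrite /Mw /= IH [in RHS]IH mulmx1 mulmxA.
Qed.

Lemma Mw_cat x y : Mw a b (x ++ y) = Mw a b y *m Mw a b x.
Proof. by rewrite {1}/Mw foldl_cat Mw_foldl. Qed.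

Lemma Mw_rcons s x : Mw a b (rcons s x) = Mlet a b x *m Mw a b s.
Proof. by rewrite -cats1 Mw_cat /Mw /= mulmx1. Qed.

Lemma Mw_cons x s : Mw a b (x :: s) = Mw a b s *m Mlet a b x.
Proof. by rewrite -cat1s Mw_cat /Mw /= mulmx1. Qed.

Lemma Mw_wpow u k : Mw a b (wpow u k) = Mw a b u ^+ k.
Proof.
elim: k => [|k IH]; first by rewrite /wpow /= /Mw /= expr0.
by rewrite /wpow /= Mw_cat -/(wpow u k) IH exprSr mulmxE.
Qed.

Lemma Sw_rcons s x : Sw a b (rcons s x) = Sw a b s + Mw a b (rcons s x).
Proof.
rewrite /Sw size_rcons big_ord_recr /=; congr (_ + _).
  apply: eq_bigr => i _; rewrite -cats1 takel_cat //; exact: ltn_ord.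
by rewrite take_oversize // size_rcons.
Qed.

Lemma sum2 (f : 'I_2 -> R) : \sum_(i < 2) f i = f 0 + f 1.
Proof.
rewrite !big_ord_recl big_ord0 addr0; congr (_ + f _); exact/val_inj.
Qed.

Lemma Sw_row x (j : 'I_2) : Sw a b x 1 j = Mw a b x 0 j + Mw a b x 1 j - 1.
Proof.
elim/last_ind: x => [|s x IH].
  rewrite /Sw big_ord0 /Mw /= !mxE.
  by case: j => [[|[|j]] Hj] //=; rewrite ?addr0 ?add0r subrr.
rewrite Sw_rcons Mw_rcons !mxE IH !sum2 /Mlet.
case: x; rewrite /Mc !mxE /=; ring.
Qed.

Definition Qm : 'M[R]_2 := \matrix_(i < 2, j < 2)
  (if (i == 0 :> nat) && (j == 0 :> nat) then 0 else 1).
Definition Em : 'M[R]_2 := \matrix_(i < 2, j < 2)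
  (if i == 0 :> nat then 0 else 1).
Definition Km : 'M[R]_2 := \matrix_(i < 2, j < 2)
  (if (i == 1 :> nat) && (j == 1 :> nat) then 1 else 0).

Lemma ord2E (P : 'I_2 -> Prop) : P 0 -> P 1 -> forall i, P i.
Proof.
move=> P0 P1 [[|[|i]] Hi] //.
  by have -> : Ordinal Hi = 0 by apply/val_inj.
by have -> : Ordinal Hi = 1 by apply/val_inj.
Qed.

Lemma Q_Mc c : Qm * Mc c = (Mc c)^T * Qm.
Proof.
rewrite -mulmxE; apply/matrixP; apply: ord2E; apply: ord2E;
rewrite !mxE !sum2 !mxE /=; ring.
Qed.

Lemma Q_Mlet x : Qm * Mlet a b x = (Mlet a b x)^T * Qm.
Proof. by case: x; apply: Q_Mc. Qed.

Lemma Q_Mw_rev w : Qm * Mw a b (rev w) = (Mw a b w)^T * Qm.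
Proof.
elim: w => [|x w IH]; first by rewrite /Mw /= trmx1 mul1r mulr1.
by rewrite rev_cons Mw_rcons Mw_cons trmx_mul !mulmxE mulrA Q_Mlet -!mulrA IH.
Qed.

Lemma ET : Em^T = Qm * Km.
Proof.
rewrite -mulmxE; apply/matrixP; apply: ord2E; apply: ord2E;
rewrite !mxE ?sum2 ?mxE /=; ring.
Qed.

Lemma QYK (Y : 'M[R]_2) : (Qm * Y * Km) 1 1 = (Em * Y) 1 1.
Proof. rewrite -!mulmxE !mxE !sum2 !mxE !sum2 !mxE /=; ring. Qed.

Lemma pow_swap (X Y : 'M[R]_2) j : (X * Y) ^+ j * X = X * (Y * X) ^+ j.
Proof.
elim: j => [|j IH]; first by rewrite !expr0 mul1r mulr1.
by rewrite !exprS -!mulrA IH !mulrA.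
Qed.

Lemma key (W F G : 'M[R]_2) j :
  Qm * W = W^T * Qm -> Qm * F = F^T * Qm -> Qm * G = G^T * Qm ->
  (Em * ((W * (F * G)) ^+ j * W)) 1 1 = (Em * ((W * (G * F)) ^+ j * W)) 1 1.
Proof.
move=> HW HF HG.
set C := F * G * W.
have CT : C^T * Qm = Qm * (W * (G * F)).
  rewrite /C !trmx_mul !mulmxE -!mulrA -HF.
  rewrite [G^T * (_ * _)]mulrA -HG [W^T * _]mulrA [W^T * (_ * _)]mulrA -HW.
  by rewrite !mulrA.
have HC : forall j, ((C ^+ j)^T) * Qm = Qm * (W * (G * F)) ^+ j.
  elim=> [|i IH]; first by rewrite !expr0 trmx1 mul1r mulr1.
  rewrite exprS trmx_mul mulmxE -mulrA CT mulrA IH.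
  by rewrite -mulrA -exprSr.
rewrite pow_swap mulrA -/C.
transitivity ((Em * W * C ^+ j)^T 1 1); first by rewrite [in RHS]mxE.
rewrite -!mulmxE !trmx_mul !mulmxE ET.
rewrite [W^T * _]mulrA -HW !mulrA HC -[Qm * _ * W]mulrA.
by rewrite QYK !mulrA.
Qed.

End Aux.
Arguments Qm {R}. Arguments Em {R}. Arguments Km {R}.

Theorem proposition5 (R : realFieldType) (a b : R) (w : seq bool) :
  0 <= a -> a < b -> rev w = w ->
  [/\ Sw a b w 1 0 = Mw a b w 1 1 - 1,
      Sw a b w 1 1 = Mw a b w 0 1 + Sw a b w 1 0 &
      forall k : nat,
        (Sw a b ([:: true; false] ++ w)
           *m Mw a b (w ++ wpow ([:: true; false] ++ w) k)
         - Sw a b ([:: false; true] ++ w)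
           *m Mw a b (w ++ wpow ([:: false; true] ++ w) k)) 1 1 = 0].
Proof.
move=> _ _ Hw.
have HQW : Qm * Mw a b w = (Mw a b w)^T * Qm by rewrite -{1}Hw Q_Mw_rev.
have H01 : Mw a b w 1 1 = Mw a b w 0 0 + Mw a b w 1 0.
  have := congr1 (fun M : 'M[R]_2 => M 0 1) HQW.
  rewrite -!mulmxE /= !mxE !sum2 !mxE /= mul0r mul1r !mulr1 add0r => ->; done.
have P1 : Sw a b w 1 0 = Mw a b w 1 1 - 1 by rewrite Sw_row H01.
split=> //; first by rewrite P1 Sw_row; ring.
move=> k.
have rowS : forall x (X : 'M[R]_2),
    (Sw a b x *m X) 1 1 = (Em * (Mw a b x - 1) * X) 1 1.
  move=> x X; rewrite -!mulmxE !mxE; apply: eq_bigr => i _; congr (_ * _).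
  rewrite Sw_row !mxE sum2 !mxE /=.
  by case: i => [[|[|i]] Hi] //=; ring.
have subE : forall X Y : 'M[R]_2, (X - Y) 1 1 = X 1 1 - Y 1 1.
  by move=> X Y; rewrite !mxE.
rewrite subE rowS rowS (Mw_cat _ _ _ w) (Mw_cat _ _ _ w) !Mw_wpow (Mw_cat _ _ _ [:: true; false]) (Mw_cat _ _ _ [:: false; true]).
set W := Mw a b w.
have -> : Mw a b [:: true; false] = Mlet a b false * Mlet a b true.
  by rewrite -cat1s Mw_cat /Mw /= !mulmx1 mulmxE.
have -> : Mw a b [:: false; true] = Mlet a b true * Mlet a b false.
  by rewrite -cat1s Mw_cat /Mw /= !mulmx1 mulmxE.
rewrite !mulmxE.
set F := Mlet a b false; set G := Mlet a b true.
have E1 : forall A : 'M[R]_2, Em * (A - 1) * (A ^+ k * W)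
    = Em * (A ^+ k.+1 * W) - Em * (A ^+ k * W).
  by move=> A; rewrite mulrBr mulr1 mulrBl exprS !mulrA.
have HF : Qm * F = F^T * Qm by apply: Q_Mlet.
have HG : Qm * G = G^T * Qm by apply: Q_Mlet.
rewrite !E1 !subE (key _ _ _ _ k HQW HF HG) (key _ _ _ _ k.+1 HQW HF HG).
by rewrite subrr.
Qed.
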